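(* Let $U\subseteq\mathbb{R}$ be a nonempty open set and $A\subseteq\mathbb{R}$ a set that is both meager and Lebesgue null. Then there are pairwise disjoint sets $D_k\subseteq U$ and reals $x_k$ ($k\in\omega$) such that $\bigcup_{k\in\omega}D_k$ is nowhere dense and $A\subseteq\bigcup_{k\in\omega}(D_k+x_k)$.
   Context: $D+x=\{d+x:d\in D\}$. *)

(* Defs.v *)
From HB Require Import structures.
From mathcomp Require Import all_boot all_order all_algebra.
From mathcomp Require Import all_classical all_reals all_analysis.
Set Implicit Arguments. Unset Strict Implicit. Unset Printing Implicit Defensive.
Import Order.TTheory GRing.Theory Num.Theory.
Import numFieldTopology.Exports numFieldNormedType.Exports.
Local Open Scope classical_set_scope.
Local Open Scope ring_scope.

Definition nowhere_dense (T : topologicalType) (S : set T) : Prop :=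
  (closure S)° = set0.

Definition meager (T : topologicalType) (A : set T) : Prop :=
  exists F : nat -> set T, (forall n, nowhere_dense (F n)) /\ A `<=` \bigcup_n F n.

Definition translate (R : realType) (D : set R) (x : R) : set R :=
  [set d + x | d in D].

(* Main.v *)
Require Import Defs.
From HB Require Import structures.
From mathcomp Require Import all_boot all_order all_algebra.
From mathcomp Require Import all_classical all_reals all_analysis.
From mathcomp Require Import measurable_realfun.
From mathcomp Require Import ring lra.
Import Order.TTheory GRing.Theory Num.Theory.
Import numFieldTopology.Exports numFieldNormedType.Exports.
Local Open Scope classical_set_scope.
Local Open Scope ring_scope.


Lemma cover (R : realType) (A : set R) (e : R) : 0 < e ->
  (@lebesgue_measure R).-negligible A ->
  exists a b : nat -> R, (forall i, a i <= b i) /\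
    (A `<=` \bigcup_i [set z | a i < z /\ z < b i]) /\
    (forall n, \sum_(i < n) (b i - a i) <= e).
Proof.
move=> e0 /negligible_outer_measure; rewrite outer_measure_open_itv_cover => H0.
have fn : ereal_inf [set \big[+%E/0]_(0 <= k <oo) wlength idfun (F k) | F in open_itv_cover A] \is a fin_num by rewrite H0.
have [_ [F [Fitv AF] <-] Fe] := lb_ereal_inf_adherent e0 fn.
rewrite H0 add0e in Fe.
have [ab Hab] := choice Fitv.
exists (fun i => (ab i).1), (fun i => Num.max (ab i).1 (ab i).2).
split; first by move=> i; rewrite le_max lexx.
split.
  move=> z /AF [k _]; rewrite Hab /= in_itv /= => /andP[h1 h2].
  by exists k => //; split => //; rewrite lt_max h2 orbT.
move=> n; rewrite -lee_fin; apply: (le_trans _ (ltW Fe)).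
rewrite -sumEFin.
apply: le_trans (nneseries_lim_ge n _); last first.
  by move=> i _ _; exact: wlength_ge0.
rewrite big_mkord; apply: lee_sum => i _.
rewrite Hab wlength_itv /=.
case: ltP => h.
  rewrite lte_fin in h; rewrite max_r; last exact: ltW.
  by rewrite EFinD.
rewrite lee_fin in h; by rewrite max_l // subrr.
Qed.

Definition ndi {R : realType} (S : set R) := forall a b : R, a < b ->
  exists c d : R, a <= c /\ c < d /\ d <= b /\ (forall z, c < z -> z < d -> ~ S z).

Lemma ndiS (R : realType) (S T : set R) : S `<=` T -> ndi T -> ndi S.
Proof.
move=> ST H a b ab; have [c [d [h1 [h2 [h3 h4]]]]] := H a b ab.
by exists c, d; do 3 split => //; move=> z cz zd /ST; exact: h4.
Qed.

Lemma ndi_translate (R : realType) (S : set R) y : ndi S -> ndi [set z + y | z in S].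
Proof.
move=> H a b ab.
have [|c [d [h1 [h2 [h3 h4]]]]] := H (a - y) (b - y); first by rewrite ltrD2r.
exists (c + y), (d + y); split; first by rewrite -lerBlDr.
split; first by rewrite ltrD2r.
split; first by rewrite -lerBrDr.
move=> z cz zd [w Sw wz]; apply: (h4 w) => //.
  by rewrite -(ltrD2r y) wz.
by rewrite -(ltrD2r y) wz.
Qed.

Lemma nd_ndi (R : realType) (S : set R) : nowhere_dense S -> ndi S.
Proof.
move=> H a b ab; apply: contrapT => Hn.
have : (closure S)° ((a + b) / 2) ; last by rewrite H.
apply/nbhs_ballP; exists ((b - a) / 2); first by apply: divr_gt0; rewrite ?subr_gt0.
move=> w; rewrite -ball_normE /= ltr_distlC => /andP[w1 w2].
have aw : a < w by move: w1; rewrite -(ltrD2r 2^-1) ; lra.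
have wb : w < b by lra.
move=> B /nbhs_ballP [eps eps0 HB].
apply: contrapT => nSB; apply: Hn.
pose m0 := Num.min (b - w) eps.
have m0p : 0 < m0 by rewrite lt_min subr_gt0 wb eps0.
have m1 : m0 <= b - w by rewrite ge_min lexx.
have m2 : m0 <= eps by rewrite ge_min lexx orbT.
exists w, (w + m0); split; first exact: ltW.
split; first by rewrite ltrDl.
split; first by rewrite -lerBrDl.
move=> z wz zd Sz; apply: nSB; exists z; split => //.
apply: HB; rewrite -ball_normE /= ltr_distlC; apply/andP; split; lra.
Qed.

Lemma ndi_nd (R : realType) (S : set R) : ndi S -> nowhere_dense S.
Proof.
move=> H; rewrite /nowhere_dense; apply/seteqP; split => // m /nbhs_ballP [e /= e0 He].
have [|c [d [h1 [h2 [h3 h4]]]]] := H (m - e) (m + e); first lra.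
have : closure S ((c + d) / 2).
  apply: He; rewrite -ball_normE /= ltr_distlC; apply/andP; split; lra.
move=> /(_ (ball ((c + d) / 2) ((d - c) / 2))) [].
  apply/nbhs_ballP; exists ((d - c) / 2) => //=; lra.
move=> z [Sz]; rewrite -ball_normE /= ltr_distlC => /andP[z1 z2].
apply: (h4 z) => //; lra.
Qed.

Lemma ndi_bigcup (R : realType) (p : nat -> R) (E : nat -> set R) :
  (forall k, p k <= p k.+1) ->
  (forall k z, E k z -> p k < z /\ z <= p k.+1) ->
  (forall k, ndi (E k)) -> ndi (\bigcup_k E k).
Proof.
move=> pS Ep HE a b ab.
have mono : forall i j, (i <= j)%N -> p i <= p j.
  move=> i j /subnK <-; elim: (j - i)%N => [|n IH]; first by rewrite add0n.
  by rewrite addSn; exact: le_trans IH (pS _).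
case: (pselect (forall m, p m <= a)) => [Hall | Hex].
  exists a, b; do 3 split => //.
  move=> z az zb [k _ /Ep [_ h]].
  by have := Hall k.+1; lra.
have [m Hm] : exists m, a < p m.
  apply: contrapT => Hn; apply: Hex => m; rewrite leNgt; apply/negP => Hm.
  by apply: Hn; exists m.
case: (ltP a (p 0)) => [a0 | p0a].
  pose d0 := a + Num.min (b - a) (p 0 - a).
  have m0p : 0 < Num.min (b - a) (p 0 - a) by rewrite lt_min !subr_gt0 ab a0.
  have m1 : Num.min (b - a) (p 0 - a) <= b - a by rewrite ge_min lexx.
  have m2 : Num.min (b - a) (p 0 - a) <= p 0 - a by rewrite ge_min lexx orbT.
  exists a, d0; split => //; split; first by rewrite /d0; lra.
  split; first by rewrite /d0; lra.
  move=> z az zd [k _ /Ep [h _]].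
  by have := mono 0%N k (leq0n _); rewrite /d0 in zd; lra.
have [k [k1 k2]] : exists k, p k <= a /\ a < p k.+1.
  elim: m Hm => [|m IH] Hm; first by lra.
  case: (leP (p m) a) => h; first by exists m.
  exact: IH.
pose m0 := Num.min (b - a) (p k.+1 - a).
have m0p : 0 < m0 by rewrite lt_min !subr_gt0 ab k2.
have m1 : m0 <= b - a by rewrite ge_min lexx.
have m2 : m0 <= p k.+1 - a by rewrite ge_min lexx orbT.
have [|c [d [h1 [h2 [h3 h4]]]]] := HE k a (a + m0); first lra.
exists c, d; split => //; split => //; split; first lra.
move=> z cz zd [j _ Ejz].
have [h5 h6] := Ep _ _ Ejz.
case: (ltngtP j k) => [jk|kj|jk].
- by have := mono _ _ jk; lra.
- by have := mono _ _ kj; lra.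
- by subst j; exact: (h4 z).
Qed.

Lemma mono_seq {R : realType} (f : nat -> R) : (forall k, f k <= f k.+1) ->
  forall i j, (i <= j)%N -> f i <= f j.
Proof.
move=> fS i j /subnK <-; elim: (j - i)%N => [|n IH]; first by rewrite add0n.
by rewrite addSn; exact: le_trans IH (fS _).
Qed.

Theorem mainTheorem17 (R : realType) (U A : set R) :
  open U -> U !=set0 ->
  meager A -> (@lebesgue_measure R).-negligible A ->
  exists (D : nat -> set R) (x : nat -> R),
    (forall k, D k `<=` U) /\
    (forall i j, i <> j -> D i `&` D j = set0) /\
    nowhere_dense (\bigcup_k D k) /\
    A `<=` \bigcup_k translate (D k) (x k).
Proof.
move=> oU [c Uc] mA nA.
have [del /= del0 Hdel] := (nbhs_ballP _ _).1 (oU c Uc).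
case: mA => F [FND AF].
have hc : forall n, exists ab : (nat -> R) * (nat -> R),
    (forall i, ab.1 i <= ab.2 i) /\
    (A `<=` \bigcup_i [set z | ab.1 i < z /\ z < ab.2 i]) /\
    (forall k, \sum_(i < k) (ab.2 i - ab.1 i) <= del / 2 ^+ n.+1).
  move=> n.
  have [|a [b H]] := @cover R A (del / 2 ^+ n.+1) _ nA.
    by apply: divr_gt0 => //; apply: exprn_gt0.
  by exists (a, b).
have [ab Hab] := choice hc.
pose a n i := (ab n).1 i.
pose b n i := (ab n).2 i.
pose s (n : nat) := c + del - del / 2 ^+ n.
pose P n i := s n + \sum_(j < i) (b n j - a n j).
pose E n i := [set z + (P n i - a n i) | z in
  A `&` F n `&` [set z | a n i < z /\ z < b n i]].
have tpos n : 0 < del / 2 ^+ n by apply: divr_gt0 => //; apply: exprn_gt0.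
have hs n : s n.+1 = s n + del / 2 ^+ n.+1.
  rewrite /s exprS; field.
  by rewrite expf_neq0.
have sS n : s n <= s n.+1 by rewrite hs; have := tpos n.+1; lra.
have s0 : s 0%N = c by rewrite /s expr0 divr1; lra.
have sge n : c <= s n by rewrite -s0; apply: mono_seq.
have slt n : s n < c + del by rewrite /s; have := tpos n; lra.
have PS n i : P n i.+1 = P n i + (b n i - a n i).
  by rewrite /P big_ord_recr /= addrA.
have Pge n i : s n <= P n i.
  rewrite /P lerDl; apply: sumr_ge0 => j _; rewrite subr_ge0.
  by have [h _] := Hab n; exact: h.
have Ple n i : P n i <= s n.+1.
  rewrite hs /P lerD2l.
  by have [_ [_ h]] := Hab n; exact: h.
have PSle n i : P n i <= P n i.+1.
  rewrite PS lerDl subr_ge0.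
  by have [h _] := Hab n; exact: h.
have EP n i z : E n i z -> P n i < z /\ z <= P n i.+1.
  move=> [w [_ [w1 w2]] <-]; rewrite PS; split; lra.
have Es n i z : E n i z -> s n < z /\ z <= s n.+1.
  move=> /EP [h1 h2]; have := Pge n i; have := Ple n i.+1; split; lra.
pose D k := match @pickle_inv (prod nat nat) k with
  | Some q => E q.1 q.2 | None => set0 end.
pose x k := match @pickle_inv (prod nat nat) k with
  | Some q => a q.1 q.2 - P q.1 q.2 | None => 0 end.
exists D, x; split.
  move=> k z; rewrite /D; case: pickle_inv => [[n i]|] //= /Es [h1 h2].
  apply: Hdel; rewrite -ball_normE /= ltr_distlC.
  have := sge n; have := slt n.+1; move=> *; apply/andP; split; lra.
split.
  move=> i j ij; rewrite /D.
  have Hi := @pickle_invK (prod nat nat) i; have Hj := @pickle_invK (prod nat nat) j.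
  case Ei: (pickle_inv i) => [[n1 i1]|]; last by rewrite set0I.
  case Ej: (pickle_inv j) => [[n2 i2]|]; last by rewrite setI0.
  rewrite Ei /= in Hi; rewrite Ej /= in Hj.
  apply/seteqP; split => // z [/= Z1 Z2].
  case: (ltngtP n1 n2) => [lt|gt|eq].
  - have := @mono_seq R s sS _ _ lt; have := Es _ _ _ Z1; have := Es _ _ _ Z2; lra.
  - have := @mono_seq R s sS _ _ gt; have := Es _ _ _ Z1; have := Es _ _ _ Z2; lra.
  subst n2.
  case: (ltngtP i1 i2) => [lt|gt|eq].
  - have := @mono_seq R (P n1) (PSle n1) _ _ lt; have := EP _ _ _ Z1; have := EP _ _ _ Z2; lra.
  - have := @mono_seq R (P n1) (PSle n1) _ _ gt; have := EP _ _ _ Z1; have := EP _ _ _ Z2; lra.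
  by subst i2; apply: ij; rewrite -Hi -Hj.
split.
  apply: ndi_nd.
  apply: (@ndiS _ _ (\bigcup_n \bigcup_i E n i)).
    move=> z [k _]; rewrite /D; case: pickle_inv => [[n i]|] //= Ez.
    by exists n => //; exists i.
  apply: (@ndi_bigcup _ s) => //.
    by move=> n z [i _ /Es].
  move=> n; apply: (@ndi_bigcup _ (P n)) => //; first exact: EP.
  move=> i; rewrite /E; apply: ndi_translate; apply: (@ndiS _ _ (F n)).
    by move=> z [[_ Fz] _].
  exact: nd_ndi.
move=> z Az.
have [n _ Fz] := AF z Az.
have [_ [cov _]] := Hab n.
have [i _ [h1 h2]] := cov z Az.
exists (pickle (n, i)) => //.
rewrite /translate /D /x pickleK_inv /=.
exists (z + (P n i - a n i)); last by ring.
by exists z.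
Qed.
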